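(* Persistence equivalence and Forman equivalence of discrete Morse functions on graphs are independent: there exist a finite tree $T$ with $n$ simplices and discrete Morse functions $f,g\colon T\to[0,n]$ that are persistence equivalent but not Forman equivalent, and discrete Morse functions $f',g'\colon T\to[0,n]$ that are Forman equivalent but not persistence equivalent.
   Context: For a finite simple graph $G$, its simplices are its vertices and edges; write $v<e$ if vertex $v$ is an endpoint of edge $e$; $n$ is the total number of simplices. A discrete Morse function is a function $f$ from the simplices to $[0,n]$ such that: (i) $v<e$ implies $f(v)\le f(e)$; (ii) $\min f=0$; (iii) every value is attained by at most two simplices, and if $f(\sigma)=f(\tau)$ with $\sigma\neq\tau$ then one is an endpoint of the other; (iv) if a value $f(\sigma)$ is attained only by $\sigma$, then $f(\sigma)\in\mathbb{N}$; such $\sigma$ is critical, otherwise regular. The induced gradient vector field $V_f$ is the set of pairs $\{v<e\}$ with $f(v)=f(e)$ (the regular pairs). $f,g$ are Forman equivalent if $V_f=V_g$. With critical values $c_0<\dots<c_{m-1}$, the level subcomplexes $G_{c_i}=\{\sigma:f(\sigma)\le c_i\}$ form a filtration whose persistent homology (over a field) gives the persistence diagram $D_f$ (multiset of (birth value, death value) pairs, death $\infty$ for classes never dying); $f,g$ are persistence equivalent if $D_f=D_g$. *)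

(* Defs.v *)
From HB Require Import structures.
From mathcomp Require Import all_boot all_order all_algebra.
Set Implicit Arguments. Unset Strict Implicit. Unset Printing Implicit Defensive.
Import Order.TTheory GRing.Theory Num.Theory.
Local Open Scope ring_scope.

Record sgraph := SGraph {
  gV : finType;
  gE : {set {set gV}};
  gE2 : forall e, e \in gE -> #|e| = 2%N }.

Notation edge G := {e : {set gV G} | e \in gE G}.

Notation simplex G := (gV G + edge G)%type.

Definition face (G : sgraph) (s t : simplex G) : bool :=
  match s, t with
  | inl v, inr e => v \in val e
  | _, _ => false
  end.

Definition adj (G : sgraph) : rel (gV G) := fun u v => [set u; v] \in gE G.

Definition is_tree (G : sgraph) : Prop :=
  [/\ (0 < #|gV G|)%N,
      (forall u v : gV G, connect (@adj G) u v) &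
      (forall p : seq (gV G), ~~ [&& (3 <= size p)%N, cycle (@adj G) p & uniq p])].

Section DMF.
Variables (R : realFieldType) (G : sgraph).
Implicit Types (f : simplex G -> R).

Definition nsimp : nat := #|{: simplex G}|.

Definition critical f (s : simplex G) : bool :=
  [forall t, (f t == f s) ==> (t == s)].

Definition dmf f : Prop :=
  [/\ (forall s, 0 <= f s <= (nsimp)%:R) /\ (forall s t, face s t -> f s <= f t),
      (exists s, f s = 0),
      (forall s, (#|[set t | f t == f s]| <= 2)%N),
      (forall s t, s != t -> f s = f t -> face s t \/ face t s) &
      (forall s, critical f s -> exists k : nat, f s = k%:R)].

Definition gradient f : {set simplex G * simplex G} :=
  [set p | face p.1 p.2 && (f p.1 == f p.2)].

Definition forman_equiv f g : Prop := gradient f = gradient g.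

Definition cvals f : seq R :=
  sort <=%R [seq f s | s <- enum {: simplex G} & critical f s].
Definition ncrit f : nat := size (cvals f).
Definition cval f (i : nat) : R := nth 0 (cvals f) i.

End DMF.

(* Simplicial homology of a graph over a field F, with matrices acting on
   row vectors.  Vertices / edges are indexed via enum_rank; the edge
   {u,v} is oriented from lower to higher enum_rank. *)
Section Homology.
Variables (F : fieldType) (R : realFieldType) (G : sgraph).
Implicit Types (f : simplex G -> R).

Definition nV := #|gV G|.
Definition nE := #|{: edge G}|.

Definition bdry : 'M[F]_(nE, nV) :=
  \matrix_(i < nE, j < nV)
    let e := val (enum_val i) in let v := enum_val j in
    if v \in e then
      (if [forall w in e, (enum_rank w <= enum_rank v)%N] then 1 else -1)
    else 0.

(* chain spaces of the level subcomplex G_a = {sigma | f sigma <= a} *)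
Definition C0 f (a : R) : 'M[F]_nV :=
  diag_mx (\row_(j < nV) (f (inl (enum_val j)) <= a)%R%:R).
Definition C1 f (a : R) : 'M[F]_nE :=
  diag_mx (\row_(i < nE) (f (inr (enum_val i)) <= a)%R%:R).

(* persistent Betti numbers beta_k^{a,b} = dim Z_k(G_a) / (Z_k(G_a) cap B_k(G_b)) *)
Definition pbetti (k : nat) f (a b : R) : nat :=
  if k == 0%N then
    (\rank (C0 f a) - \rank (C0 f a :&: (C1 f b *m bdry))%MS)%N
  else if k == 1%N then
    \rank (C1 f a :&: kermx bdry)%MS   (* B_1 = 0: no 2-simplices *)
  else 0%N.

(* beta_k^{i,j} for the filtration G_{c_0} <= ... <= G_{c_{m-1}}, with
   beta_k^{-1,j} = 0; indices are shifted: bI i' j, i' = i+1. *)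
Definition betaI (k : nat) f (i' j : nat) : int :=
  if i' is i.+1 then (pbetti k f (cval f i) (cval f j))%:Z else 0.

Definition mult_fin (k : nat) f (i j : nat) : int :=
  betaI k f i.+1 j.-1 - betaI k f i.+1 j - betaI k f i j.-1 + betaI k f i j.

Definition mult_inf (k : nat) f (i : nat) : int :=
  betaI k f i.+1 (ncrit f).-1 - betaI k f i (ncrit f).-1.

(* persistence diagram D_f as a multiset of (birth, death) pairs over all
   dimensions; death None = infinity *)
Definition diagram f (b : R) (d : option R) : int :=
  \sum_(k < 2)
   (\sum_(i < ncrit f) \sum_(j < ncrit f | (i < j)%N)
       (if (b == cval f i) && (d == Some (cval f j)) then mult_fin k f i j else 0)
    + \sum_(i < ncrit f)
       (if (b == cval f i) && (d == None) then mult_inf k f i else 0)).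

Definition pers_equiv f g : Prop :=
  forall (b : R) (d : option R), diagram f b d = diagram g b d.

End Homology.

(* Main.v *)
Require Import Defs.
From HB Require Import structures.
From mathcomp Require Import all_boot all_order all_algebra.
Import Order.TTheory GRing.Theory Num.Theory.
Local Open Scope ring_scope.

Definition E0 : {set {set bool}} := [set [set true; false]].
Lemma E0_2 : forall e, e \in E0 -> #|e| = 2%N.
Proof. by move=> e; rewrite in_set1 => /eqP ->; rewrite cards2. Qed.
Definition T := SGraph E0_2.
Definition e0 : edge T := exist _ ([set true; false] : {set gV T}) (set11 _).

Lemma simpl_cases (s : simplex T) : [\/ s = inl true, s = inl false | s = inr e0].
Proof.
case: s => [[]|x]; [by constructor 1| by constructor 2|constructor 3].
congr inr; apply: val_inj => /=; case: x => v /= H.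
by move: H; rewrite in_set1 => /eqP.
Qed.

Lemma face_lr (v : gV T) (x : edge T) : face (inl v) (inr x).
Proof.
case: x => e He /=; move: He; rewrite in_set1 => /eqP ->.
by case: v; rewrite !inE eqxx ?orbT.
Qed.

Lemma nsimpT : nsimp T = 3%N.
Proof. by rewrite /nsimp card_sum card_bool card_sig cardE /= /E0 enum_set1. Qed.

Lemma treeT : is_tree T.
Proof.
split.
- by rewrite card_bool.
- move=> u v; case: (eqVneq u v) => [->|neq]; first exact: connect0.
  apply: connect1; rewrite /adj /= /E0 in_set1.
  by case: u v neq => [] [] //= _; rewrite ?eqxx // setUC.
- move=> p; apply/negP => /and3P [H3 _ U].
  have := card_uniqP U; move=> Hc.
  have : (size p <= 2)%N by rewrite -Hc -(card_bool) max_card.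
  by move=> H; move: (leq_trans H3 H).
Qed.

Section Funs.
Variable R : realFieldType.

Definition nf (a b c : nat) (s : simplex T) : nat :=
  match s with inl true => a | inl false => b | inr _ => c end.
Definition mkf (a b c : nat) : simplex T -> R := fun s => (nf a b c s)%:R.

Lemma mkf_eq a b c s t : (mkf a b c s == mkf a b c t) = (nf a b c s == nf a b c t).
Proof. by rewrite /mkf eqr_nat. Qed.

Lemma dmf_mk (a b c : nat) : a != b -> (a <= c)%N -> (b <= c)%N -> (c <= 3)%N ->
  (a == 0%N) || (b == 0%N) -> dmf (mkf a b c).
Proof.
move=> ab ac bc c3 ab0; split.
- split.
  + move=> s; rewrite nsimpT /mkf ler0n ler_nat /=.
    by case: (simpl_cases s) => ->; apply: leq_trans c3.
  + move=> s t; case: (simpl_cases s) => ->; case: (simpl_cases t) => -> //= _;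
    by rewrite /mkf ler_nat.
- by case/orP: ab0 => /eqP H; [exists (inl true) | exists (inl false)]; rewrite /mkf /= H.
- move=> s.
  have [t Ht] : exists t, nf a b c t != nf a b c s.
    case: (eqVneq (nf a b c s) a) => H; last by exists (inl true); rewrite eq_sym.
    by exists (inl false); rewrite H eq_sym.
  have : [set t | mkf a b c t == mkf a b c s] \proper [set: simplex T].
    rewrite properT; apply/eqP => /setP /(_ t); rewrite !inE mkf_eq (negbTE Ht).
    done.
  move/proper_card; rewrite cardsT -/(nsimp T) nsimpT.
  done.
- move=> s t; case: (simpl_cases s) => ->; case: (simpl_cases t) => ->; rewrite ?eqxx //= => _;
    rewrite /mkf /= => /eqP; rewrite eqr_nat ?inE ?eqxx ?orbT; auto;
    [rewrite (negbTE ab) // | rewrite eq_sym (negbTE ab) //].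
- by move=> s _; exists (nf a b c s).
Qed.
End Funs.

Section Mx.
Variables (F : fieldType) (R : realFieldType).
Implicit Types (f : simplex T -> R).

Lemma C0_full f a : (forall v, f (inl v) <= a) -> C0 F f a = 1%:M.
Proof. by move=> H; apply/matrixP => i j; rewrite !mxE H. Qed.

Lemma C1_full f a : (forall x, f (inr x) <= a) -> C1 F f a = 1%:M.
Proof. by move=> H; apply/matrixP => i j; rewrite !mxE H. Qed.

Lemma C1_zero f a : (forall x, ~~ (f (inr x) <= a)) -> C1 F f a = 0.
Proof. by move=> H; apply/matrixP => i j; rewrite !mxE (negbTE (H _)) mul0rn. Qed.

Lemma C0_one f a v0 : (forall v, (f (inl v) <= a) = (v == v0)) -> \rank (C0 F f a) = 1%N.
Proof.
move=> H.
have -> : C0 F f a = delta_mx (enum_rank v0) (enum_rank v0).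
  apply/matrixP => i j; rewrite !mxE H.
  case: (eqVneq i (enum_rank v0)) => [->|ne]; first by rewrite enum_rankK eqxx /= eq_sym.
  have -> : (enum_val i == v0) = false.
    by apply/negbTE; apply: contra ne => /eqP <-; rewrite enum_valK.
  by rewrite mul0rn.
exact: mxrank_delta.
Qed.

Lemma nE1 : nE T = 1%N.
Proof. by rewrite /nE card_sig cardE /= /E0 enum_set1. Qed.

Lemma bdry_rank : \rank (bdry F T) = 1%N.
Proof.
apply/eqP; rewrite eqn_leq; apply/andP; split.
  by move: (rank_leq_row (bdry F T)); case: _ / nE1.
rewrite lt0n mxrank_eq0; apply/eqP => /matrixP /(_ (enum_rank e0) (enum_rank (true : gV T))).
rewrite !mxE enum_rankK enum_rankK /= !inE eqxx /=.
by case: ifP => _ /eqP; rewrite ?oppr_eq0 oner_eq0.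
Qed.

Lemma ker_rank : \rank (kermx (bdry F T)) = 0%N.
Proof. by rewrite mxrank_ker bdry_rank nE1. Qed.

Lemma pbetti1_0 f a b : pbetti F 1 f a b = 0%N.
Proof.
rewrite /pbetti /=; apply/eqP; rewrite -leqn0 -ker_rank; apply: mxrankS; exact: capmxSr.
Qed.

Lemma cap_zero_rank m (A : 'M[F]_(m, nV T)) : A = 0 -> forall B : 'M[F]_(nE T, nV T), \rank (B :&: A)%MS = 0%N.
Proof. by move=> -> B; rewrite capmx0 mxrank0. Qed.

Lemma cap_bdry_rank0 f a w : ~~ (f (inl w) <= a) ->
  \rank (C0 F f a :&: bdry F T)%MS = 0%N.
Proof.
move=> Hw; apply/eqP; apply/negPn/negP => Hne.
have Hl := mxrank_leqif_sup (capmxSr (C0 F f a) (bdry F T)).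
have Hle : (\rank (C0 F f a :&: bdry F T) <= 1)%N.
  by rewrite -bdry_rank; exact: mxrankS (capmxSr _ _).
have : (bdry F T <= C0 F f a :&: bdry F T)%MS.
  rewrite -Hl.2 bdry_rank eqn_leq Hle /=; by rewrite lt0n.
move=> /submx_trans /(_ (capmxSl _ _)) /submxP [D HD].
move/matrixP: HD => /(_ (enum_rank e0) (enum_rank w)).
rewrite mul_mx_diag !mxE !enum_rankK (negbTE Hw) mulr0 /=.
have -> : w \in [set true; false] by case: w Hw => /= _; rewrite !inE eqxx ?orbT.
by case: ifP => _ /eqP; rewrite ?oppr_eq0 oner_eq0.
Qed.
End Mx.

Section Cv.
Variable R : realFieldType.

Lemma criticalP (f : simplex T -> R) s : reflect (forall t, f t = f s -> t = s) (critical f s).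
Proof.
apply: (iffP forallP) => H t; first by move=> E; move: (H t); rewrite E eqxx => /eqP.
by apply/implyP => /eqP /H ->.
Qed.

Lemma cvals_one (f : simplex T -> R) s0 : (forall s, critical f s = (s == s0)) -> cvals f = [:: f s0].
Proof.
move=> H; rewrite /cvals (eq_filter H).
have -> : [seq s <- enum {: simplex T} | s == s0] = [:: s0].
  by apply: filter_pred1_uniq; [apply: enum_uniq | apply: mem_enum].
by [].
Qed.
End Cv.

Section Part1.
Variables (F : fieldType) (R : realFieldType).

Lemma diag1 (f : simplex T -> R) : cvals f = [:: 0] -> pbetti F 0 f 0 0 = 1%N ->
  forall b d, diagram F f b d = if (b == 0) && (d == None) then 1 else 0.
Proof.
move=> Hc Hp b d; rewrite /diagram /mult_inf /betaI /ncrit /cval Hc /=.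
rewrite !big_mkcond /=.
rewrite !big_ord_recr !big_ord0 /= !add0r Hp pbetti1_0 !subr0.
have z : forall (G : 'I_1 -> int), \sum_(j < 1 | (0 < j)%N) G j = 0.
  by move=> G; rewrite big_pred0 //; case=> -[].
rewrite !z !add0r; case: ifP => _ //; rewrite addr0.
Qed.
End Part1.

Section Part2.
Variables (F : fieldType) (R : realFieldType).
Definition f2 := mkf R 0 1 2.
Definition g2 := mkf R 0 1 3.

Lemma f2_inj : injective f2.
Proof.
move=> s t /eqP; rewrite /f2 mkf_eq.
by case: (simpl_cases s) => ->; case: (simpl_cases t) => ->.
Qed.

Lemma cvals_f2 : cvals f2 = [:: 0%:R; 1%:R; 2%:R].
Proof.
have Hc : forall s, critical f2 s by move=> s; apply/criticalP => t /f2_inj.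
apply: (@irr_sorted_eq _ <%R); first exact: lt_trans; first exact: ltxx.
- by rewrite /cvals sort_lt_sorted (map_inj_uniq f2_inj) filter_uniq // enum_uniq.
- by rewrite /= !ltr_nat.
- move=> x; rewrite /cvals mem_sort; apply/mapP/idP.
  + by case=> s _ ->; case: (simpl_cases s) => ->; rewrite !inE eqxx ?orbT.
  + rewrite !inE => /or3P [] /eqP ->; [exists (inl true) | exists (inl false) | exists (inr e0)];
    by rewrite // mem_filter Hc mem_enum.
Qed.

Lemma nV2 : nV T = 2%N.
Proof. by rewrite /nV card_bool. Qed.

Lemma p11 : pbetti F 0 f2 1%:R 1%:R = 2%N.
Proof.
rewrite /pbetti /= C0_full ?C1_zero ?mul0mx ?capmx0 ?mxrank0 ?subn0 ?mxrank1 ?nV2 //.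
  by move=> x; rewrite /f2 /mkf /= ler_nat.
by case; rewrite /f2 /mkf /= ler_nat.
Qed.

Lemma p12 : pbetti F 0 f2 1%:R 2%:R = 1%N.
Proof.
rewrite /pbetti /= C0_full ?C1_full ?mul1mx.
- have Hf : row_full (1%:M : 'M[F]_(nV T)) by rewrite -sub1mx submx_refl.
  by rewrite (capTmx _ Hf) bdry_rank mxrank1 nV2.
  by move=> x; rewrite /f2 /mkf /= ler_nat.
by case; rewrite /f2 /mkf /= ler_nat.
Qed.

Lemma p01 : pbetti F 0 f2 0%:R 1%:R = \rank (C0 F f2 0%:R).
Proof.
rewrite /pbetti /= C1_zero ?mul0mx ?capmx0 ?mxrank0 ?subn0 //.
by move=> x; rewrite /f2 /mkf /= ler_nat.
Qed.

Lemma p02 : pbetti F 0 f2 0%:R 2%:R = \rank (C0 F f2 0%:R).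
Proof.
rewrite /pbetti /= C1_full ?mul1mx ?(@cap_bdry_rank0 F R f2 _ false) ?subn0 //;
  try by rewrite /f2 /mkf /= ler_nat.
all: try by move=> x; rewrite /f2 /mkf /= ler_nat.
Qed.

Lemma diag_f2 : diagram F f2 1%:R (Some 2%:R) = 1.
Proof.
rewrite /diagram /ncrit /cval cvals_f2 /=.
rewrite !big_ord_recr !big_ord0 /=.
rewrite !(big_mkcond (fun j : 'I_3 => _ < _)%N) !big_ord_recr !big_ord0 /=.
have SE : forall x y : R, (Some x == Some y) = (x == y) by [].
rewrite !SE !eqr_nat /= !add0r !addr0.
rewrite /mult_fin /betaI /cval cvals_f2 /= !pbetti1_0 p11 p12 p01 p02.
rewrite subrK subrr addr0.
by [].
Qed.

Lemma cval_g2 j : (j < ncrit g2)%N -> cval g2 j != 2%:R.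
Proof.
move=> Hj; have : cval g2 j \in cvals g2 by apply: mem_nth.
rewrite /cvals mem_sort => /mapP [s _ ->].
by case: (simpl_cases s) => ->; rewrite /g2 /mkf /= eqr_nat.
Qed.

Lemma diag_g2 : diagram F g2 1%:R (Some 2%:R) = 0.
Proof.
rewrite /diagram; apply: big1 => k _.
rewrite big1 ?add0r; first by apply: big1 => i _; rewrite andbF.
move=> i _; apply: big1 => j _.
have SE : forall x y : R, (Some x == Some y) = (x == y) by [].
rewrite SE [2%:R == _]eq_sym (negbTE (@cval_g2 j (ltn_ord j))) andbF //.
Qed.
End Part2.

Section Main.
Variables (F : fieldType) (R : realFieldType).
Definition f1 := mkf R 0 1 1.
Definition g1 := mkf R 1 0 1.

Lemma crit_f1 s : critical f1 s = (s == inl true).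
Proof.
case: (simpl_cases s) => ->; rewrite ?eqxx.
- apply/criticalP => t /eqP; rewrite /f1 mkf_eq.
  by case: (simpl_cases t) => ->.
- by apply/negbTE/negP => /criticalP /(_ (inr e0) erefl).
- by apply/negbTE/negP => /criticalP /(_ (inl false) erefl).
Qed.

Lemma crit_g1 s : critical g1 s = (s == inl false).
Proof.
case: (simpl_cases s) => ->; rewrite ?eqxx.
- by apply/negbTE/negP => /criticalP /(_ (inr e0) erefl).
- apply/criticalP => t /eqP; rewrite /g1 mkf_eq.
  by case: (simpl_cases t) => ->.
- by apply/negbTE/negP => /criticalP /(_ (inl true) erefl).
Qed.

Lemma pb_f1 : pbetti F 0 f1 0 0 = 1%N.
Proof.
rewrite /pbetti /= C1_zero ?mul0mx ?capmx0 ?mxrank0 ?subn0.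
  by apply: (@C0_one F R f1 0 true) => -[]; [exact: (ler_nat R 0 0) | exact: (ler_nat R 1 0)].
move=> x; apply/negP => H; move: (H : (1%:R <= 0%:R :> R)); by rewrite ler_nat.
Qed.

Lemma pb_g1 : pbetti F 0 g1 0 0 = 1%N.
Proof.
rewrite /pbetti /= C1_zero ?mul0mx ?capmx0 ?mxrank0 ?subn0.
  by apply: (@C0_one F R g1 0 false) => -[]; [exact: (ler_nat R 1 0) | exact: (ler_nat R 0 0)].
move=> x; apply/negP => H; move: (H : (1%:R <= 0%:R :> R)); by rewrite ler_nat.
Qed.

End Main.

Theorem mainTheorem9 (F : fieldType) (R : realFieldType) :
  exists (T : sgraph), is_tree T /\
  exists f g f' g' : simplex T -> R,
    [/\ dmf f /\ dmf g, dmf f' /\ dmf g',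
        pers_equiv F f g /\ ~ forman_equiv f g
      & forman_equiv f' g' /\ ~ pers_equiv F f' g'].
Proof.
exists T; split; first exact: treeT.
exists (f1 R), (g1 R), (f2 R), (g2 R); split.
- by split; apply: dmf_mk.
- by split; apply: dmf_mk.
- split.
  + move=> b d.
    rewrite (@diag1 F R (f1 R) (@cvals_one R _ _ (@crit_f1 R)) (pb_f1 F R)).
    by rewrite (@diag1 F R (g1 R) (@cvals_one R _ _ (@crit_g1 R)) (pb_g1 F R)).
  + move/setP => /(_ (inl false, inr e0)); rewrite !inE /=.
    by rewrite /f1 /g1 !mkf_eq /= !inE eqxx orbT.
- split.
  + apply/setP => -[s t]; rewrite !inE /=.
    by case: (simpl_cases s) => ->; case: (simpl_cases t) => ->;
      rewrite /= ?andbF // /f2 /g2 !mkf_eq /= !andbF.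
  + by move/(_ 1%:R (Some 2%:R)); rewrite (diag_f2 F R) (diag_g2 F R).
Qed.
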